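(* Let $G$ be a finite group. Then $\mathrm{Core}(G)$ is simply connected if and only if $G$ is cyclic of odd order.
   Context: For a group $G$, $\mathrm{Core}(G)$ is the quandle on $G$ with $x*y=xy^{-1}x$. A quandle is a set $Q$ with a binary operation $*$ such that every left translation $L_x:y\mapsto x*y$ is bijective, $x*(y*z)=(x*y)*(x*z)$ and $x*x=x$; $Q$ is connected if $\langle L_x:x\in Q\rangle$ is transitive on $Q$. For a set $S$, a quandle cocycle with values in $\mathrm{Sym}_S$ is $\theta:Q\times Q\to\mathrm{Sym}_S$ with $\theta_{x*y,x*z}\theta_{x,z}=\theta_{x,y*z}\theta_{y,z}$ and $\theta_{x,x}=1$; it is cohomologous to the trivial cocycle if there is $\gamma:Q\to\mathrm{Sym}_S$ with $\theta_{x,y}=\gamma_{x*y}\gamma_y^{-1}$ for all $x,y$. $Q$ is simply connected if it is connected and, for every set $S$, every such cocycle is cohomologous to the trivial cocycle. *)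

(* Defs.v *)
From mathcomp Require Import all_boot all_fingroup.
Set Implicit Arguments. Unset Strict Implicit. Unset Printing Implicit Defensive.

Definition is_quandle (Q : Type) (op : Q -> Q -> Q) : Prop :=
  [/\ (forall x, bijective (op x)),
      (forall x y z, op x (op y z) = op (op x y) (op x z)) &
      (forall x, op x x = x)].

(* Orbit relation of the group generated by the left translations L_x
   (words in the L_x and their inverses). *)
Inductive lreach (Q : Type) (op : Q -> Q -> Q) (a : Q) : Q -> Prop :=
  | lreach_refl : lreach op a a
  | lreach_L x b : lreach op a b -> lreach op a (op x b)
  | lreach_Linv x b : lreach op a (op x b) -> lreach op a b.

Definition quandle_connected (Q : Type) (op : Q -> Q -> Q) : Prop :=
  is_quandle op /\ forall a b : Q, lreach op a b.

(* A quandle cocycle with values in Sym_S: theta x y is a permutation of S;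
   the product in Sym_S is composition (sigma tau = sigma \o tau), and
   equality of permutations is pointwise equality. *)
Definition quandle_cocycle (Q S : Type) (op : Q -> Q -> Q)
    (theta : Q -> Q -> S -> S) : Prop :=
  [/\ (forall x y, bijective (theta x y)),
      (forall x y z, theta (op x y) (op x z) \o theta x z
                     =1 theta x (op y z) \o theta y z) &
      (forall x, theta x x =1 id)].

Definition cohomologous_trivial (Q S : Type) (op : Q -> Q -> Q)
    (theta : Q -> Q -> S -> S) : Prop :=
  exists (gamma gammainv : Q -> S -> S),
    [/\ (forall x, cancel (gamma x) (gammainv x)),
        (forall x, cancel (gammainv x) (gamma x)) &
        (forall x y, theta x y =1 gamma (op x y) \o gammainv y)].

Definition simply_connected (Q : Type) (op : Q -> Q -> Q) : Prop :=
  quandle_connected op /\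
  forall (S : Type) (theta : Q -> Q -> S -> S),
    quandle_cocycle op theta -> cohomologous_trivial op theta.

Definition core_op (gT : finGroupType) (x y : gT) : gT := (x * y^-1 * x)%g.

(* Main.v *)
Require Import Defs.
From mathcomp Require Import all_boot all_fingroup all_solvable.
From mathcomp Require Import ssralg zmodp.
From Stdlib Require Import IndefiniteDescription.
From mathcomp Require Import ring.
Set Implicit Arguments. Unset Strict Implicit. Unset Printing Implicit Defensive.
Local Open Scope group_scope.

Ltac gsimpl := rewrite ?(invMg, invgK, invg1, mulgA);
  rewrite ?(mulgV, mulVg, mul1g, mulg1, mulgK, mulgKV, invg1, mulgA).

Section CoreBasics.
Variable gT : finGroupType.
Local Notation op := (@core_op gT).
Implicit Types x y z : gT.

Lemma op_invol x y : op x (op x y) = y.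
Proof. by rewrite /core_op; gsimpl. Qed.

Lemma op_sd x y z : op x (op y z) = op (op x y) (op x z).
Proof. by rewrite /core_op; gsimpl. Qed.

Lemma op_idem x : op x x = x.
Proof. by rewrite /core_op; gsimpl. Qed.

Lemma core_quandle : is_quandle op.
Proof.
split; [move=> x; exists (op x) => y; exact: op_invol | exact: op_sd | exact: op_idem].
Qed.
End CoreBasics.
Section Backward.
Variable gT : finGroupType.
Local Notation op := (@core_op gT).
Hypothesis cm : forall x y : gT, commute x y.
Hypothesis oddn : odd #|gT|.
Variable g : gT.
Hypothesis gen : forall y : gT, y \in <[g]>.
Variable S : Type.
Variable th : gT -> gT -> S -> S.
Hypothesis thc : quandle_cocycle op th.

Local Notation n := #|gT|.
Definition hf := (#|gT|.+1./2).
Arguments hf : simpl never.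

Lemma hf2 : hf + hf = n.+1.
Proof. by rewrite /hf addnn -[RHS]odd_double_half /= oddn. Qed.

Lemma expg_n (z : gT) : z ^+ n = 1.
Proof. by rewrite -cardsT (expg_cardG (G := [set: gT]%G)) ?inE. Qed.

Lemma sqrtK (z : gT) : z ^+ hf * z ^+ hf = z.
Proof. by rewrite -expgD hf2 expgS expg_n mulg1. Qed.

Lemma ordg : #[g] = n.
Proof.
rewrite orderE -cardsT; apply: eq_card => y; by rewrite inE gen.
Qed.

Definition E := (gT * S)%type.
Definition Lt (x : gT) (p : E) : E := (op x p.1, th x p.1 p.2).

Lemma LtR x y p : Lt (op x y) (Lt x p) = Lt x (Lt y p).
Proof.
case: p => z t; rewrite /Lt /=; congr pair; first by rewrite -op_sd.
by case: thc => _ H _; exact: (H x y z t).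
Qed.

Lemma LtRl x y p : Lt x (Lt y p) = Lt (op x y) (Lt x p).
Proof. by rewrite LtR. Qed.

Lemma LtF x t : Lt x (x, t) = (x, t).
Proof. by rewrite /Lt /= op_idem; case: thc => _ _ ->. Qed.

Lemma Lt_inj x : injective (Lt x).
Proof.
case=> [z1 t1] [z2 t2]; rewrite /Lt /= => [[e1 e2]].
have ez : z1 = z2 by rewrite -(op_invol x z1) e1 op_invol.
subst z2; congr pair; case: thc => /(_ x z1) /bij_inj bi _ _; exact: bi.
Qed.

Lemma Lt_surj x q : exists p, Lt x p = q.
Proof.
case: q => z t; case: thc => /(_ x (op x z)) [h _ hK] _ _.
by exists (op x z, h t); rewrite /Lt /= op_invol hK.
Qed.

Definition C p := Lt 1 (Lt 1 p).

Lemma C1 x y p : Lt x (Lt x (Lt y p)) = Lt y (Lt x (Lt x p)).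
Proof. by rewrite [Lt x (Lt y p)]LtRl LtRl op_invol. Qed.

Lemma C2 x y q : Lt (op x y) (Lt (op x y) q) = Lt y (Lt y q).
Proof.
have [p <-] := Lt_surj x q.
by rewrite [Lt (op x y) (Lt x p)]LtR LtR C1.
Qed.

Lemma Csq z q : Lt z (Lt z q) = C q.
Proof.
have e : op (z ^+ hf) 1 = z by rewrite /core_op invg1 mulg1 sqrtK.
by rewrite -{1 2}e C2.
Qed.

Lemma CLt y p : Lt y (C p) = C (Lt y p).
Proof. by rewrite /C C1. Qed.

Lemma CF t : C (1, t) = (1, t).
Proof. by rewrite /C !LtF. Qed.

Local Notation h := (g ^+ hf).
Lemma hh : h * h = g. Proof. exact: sqrtK. Qed.

Definition T p := Lt h (Lt 1 p).
Definition T' p := Lt h^-1 (Lt 1 p).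

Lemma opT z : op h (op 1 z) = g * z.
Proof.
by rewrite /core_op !mulg1 mul1g invgK -mulgA (cm z h) mulgA hh.
Qed.

Lemma L1 z p : T (Lt z p) = Lt (g * z) (T p).
Proof. by rewrite /T [Lt 1 (Lt z p)]LtRl LtRl opT. Qed.

Lemma L1k k z p : iter k T (Lt z p) = Lt (g ^+ k * z) (iter k T p).
Proof.
elim: k => [|k IH] /=; first by rewrite mul1g.
by rewrite IH L1 expgS mulgA.
Qed.

Lemma op1 z : op 1 z = z^-1.
Proof. by rewrite /core_op mul1g mulg1. Qed.

Lemma LA p : Lt 1 (T p) = T' (Lt 1 p).
Proof. by rewrite /T /T' LtRl op1. Qed.

Lemma LAk m p : Lt 1 (iter m T p) = iter m T' (Lt 1 p).
Proof. by elim: m => [|m IH] //=; rewrite LA IH. Qed.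

Lemma LA' p : Lt 1 (T' p) = T (Lt 1 p).
Proof. by rewrite /T /T' LtRl op1 invgK. Qed.

Lemma TT' p : T (T' p) = C (C p).
Proof. by rewrite {1}/T LA' /T Csq Csq. Qed.

Lemma TC p : T (C p) = C (T p).
Proof. by rewrite /T !CLt. Qed.

Lemma iterTC k p : iter k T (C p) = C (iter k T p).
Proof. by elim: k => [|k IH] //=; rewrite IH TC. Qed.

Lemma TkT'k k p : iter k T (iter k T' p) = iter k (fun q => C (C q)) p.
Proof.
elim: k p => [|k IH] p //=.
by rewrite -iterS iterSr TT' !iterTC IH.
Qed.

Lemma TkT'k0 k t : iter k T (iter k T' (1, t)) = (1, t).
Proof. by rewrite TkT'k; elim: k => [|k IH] //=; rewrite IH !CF. Qed.

Lemma T_inj : injective T.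
Proof. by move=> p q /Lt_inj /Lt_inj. Qed.

Lemma iterT_inj k : injective (iter k T).
Proof. by elim: k => [|k IH] p q //= /T_inj /IH. Qed.

Lemma LgP t : Lt g (1, t) = T (T (1, t)).
Proof.
have := L1 1 (T' (1, t)); rewrite mulg1 TT' !CF => <-.
by rewrite LA' LtF.
Qed.

Lemma Per t : iter n T (1, t) = (1, t).
Proof.
apply: (@iterT_inj 2); rewrite -iterD addnC.
have -> : n + 2 = hf + (1 + hf) by rewrite addnCA hf2 add1n addn2.
rewrite iterD iterD /= {2}/T LAk LtF.
have := L1k hf h (iter hf T' (1, t)); rewrite TkT'k0 hh => ->.
by rewrite LgP.
Qed.

Lemma PerM q t : iter (q * n) T (1, t) = (1, t).
Proof. by elim: q => [|q IH] //; rewrite mulSn iterD IH Per. Qed.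

Lemma iter_mod a b t : a = b %[mod n] -> iter a T (1, t) = iter b T (1, t).
Proof.
suffices H c : iter c T (1, t) = iter (c %% n) T (1, t).
  by move=> e; rewrite H e -H.
by rewrite {1}(divn_eq c n) addnC iterD PerM.
Qed.

Definition ind (y : gT) : nat :=
  if [pick k : 'I_#[g] | g ^+ k == y] is Some k then val k else 0.

Lemma indP y : g ^+ ind y = y.
Proof.
rewrite /ind; case: pickP => [k /eqP // | H]; exfalso.
have /cycleP [i ei] := gen y.
have := H (Ordinal (ltn_pmod i (order_gt0 g))).
by rewrite /= expg_mod_order ei eqxx.
Qed.

Lemma ind_lt y : ind y < n.
Proof.
rewrite -ordg /ind; case: pickP => [k _ | _]; [exact: ltn_ord | exact: order_gt0].
Qed.

Definition Gam y t := iter (ind y) T (1, t).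

Lemma iterT_fst k p : (iter k T p).1 = g ^+ k * p.1.
Proof.
elim: k => [|k IH]; first by rewrite mul1g.
by rewrite iterS {1}/T /Lt /= IH opT expgS mulgA.
Qed.

Lemma Gam_fst y t : (Gam y t).1 = y.
Proof. by rewrite iterT_fst mulg1 indP. Qed.

Definition gam y t := (Gam y t).2.

Lemma Gam_eq y t : Gam y t = (y, gam y t).
Proof. by rewrite [LHS]surjective_pairing Gam_fst. Qed.

Lemma key x y t : Lt x (Gam y t) = Gam (op x y) t.
Proof.
set j := ind x; set k := ind y; set r := ind (op x y).
set m := k + n - j.
have jn : j <= k + n by rewrite (leq_trans (ltnW (ind_lt x))) ?leq_addl.
have e1 : Gam y t = iter (j + m) T (1, t).
  by rewrite /Gam; apply: iter_mod; rewrite /m subnKC // modnDr.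
rewrite e1 iterD -[x in Lt x _](indP x) -/j -[g ^+ j]mulg1 -L1k LAk LtF.
apply: (@iterT_inj m).
transitivity (iter j T (1, t)).
  by rewrite -iterD addnC iterD TkT'k0.
rewrite /Gam -/r -iterD; apply: iter_mod.
apply/eqP; rewrite -ordg -eq_expg_mod_order expgD indP.
have em : g ^+ m * x = y.
  by rewrite -(indP x) -/j -expgD /m subnK // expgD expg_n mulg1 indP.
by rewrite indP /core_op !mulgA em mulgV mul1g eqxx.
Qed.

Lemma thbij x y : exists h, cancel (th x y) h /\ cancel h (th x y).
Proof. by case: thc => /(_ x y) [h h1 h2] _ _; exists h. Qed.

Definition thi x y : S -> S :=
  proj1_sig (constructive_indefinite_description _ (thbij x y)).

Lemma thiK x y : cancel (th x y) (thi x y).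
Proof. by rewrite /thi; case: constructive_indefinite_description => h [] /=. Qed.

Lemma thKi x y : cancel (thi x y) (th x y).
Proof. by rewrite /thi; case: constructive_indefinite_description => h [] /=. Qed.

Definition Lti x (p : E) : E := (op x p.1, thi x (op x p.1) p.2).

Lemma Lt_Lti x p : Lt x (Lti x p) = p.
Proof. by case: p => z s; rewrite /Lt /Lti /= thKi op_invol. Qed.

Lemma Lti_Lt x p : Lti x (Lt x p) = p.
Proof. by case: p => z s; rewrite /Lt /Lti /= op_invol thiK. Qed.

Definition Ti p := Lti 1 (Lti h p).

Lemma T_Ti p : T (Ti p) = p.
Proof. by rewrite /T /Ti !Lt_Lti. Qed.

Lemma Ti_T p : Ti (T p) = p.
Proof. by rewrite /T /Ti !Lti_Lt. Qed.

Lemma iter_TiT k p : iter k Ti (iter k T p) = p.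
Proof. by elim: k p => [|k IH] p //; rewrite iterSr iterS Ti_T IH. Qed.

Lemma iter_TTi k p : iter k T (iter k Ti p) = p.
Proof. by elim: k p => [|k IH] p //; rewrite iterSr iterS T_Ti IH. Qed.

Definition gami y s := (iter (ind y) Ti (y, s)).2.

Lemma gamK y : cancel (gam y) (gami y).
Proof. by move=> t; rewrite /gami -Gam_eq /Gam iter_TiT. Qed.

Lemma gamiK y : cancel (gami y) (gam y).
Proof.
move=> s; rewrite /gami; set q := iter _ Ti _.
have hq : iter (ind y) T q = (y, s) by rewrite iter_TTi.
have q1 : q.1 = 1.
  apply: (@mulgI _ (g ^+ ind y)); rewrite mulg1 -iterT_fst hq /= indP //.
by rewrite /gam /Gam -q1 -surjective_pairing hq.
Qed.

Lemma back_coh : cohomologous_trivial op th.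
Proof.
exists gam, gami; split; [exact: gamK | exact: gamiK | move=> x y s /=].
have := key x y (gami y s); rewrite Gam_eq Gam_eq /Lt /= gamiK.
by case.
Qed.
End Backward.
Lemma abelian_commute (gT : finGroupType) : abelian [set: gT] -> forall x y : gT, commute x y.
Proof. by move=> ab x y; apply: (centsP ab); rewrite inE. Qed.

Theorem backward (gT : finGroupType) :
  cyclic [set: gT] -> odd #|[set: gT]| -> simply_connected (@core_op gT).
Proof.
move=> cyc; rewrite cardsT => oddn.
have [g eg] := cyclicP cyc.
have cm := abelian_commute (cyclic_abelian cyc).
have gen : forall y : gT, y \in <[g]> by move=> y; rewrite -eg inE.
split; last by move=> S th thc; exact: (@back_coh gT cm oddn g gen S th thc).
split; first exact: core_quandle.
move=> a b.
have e : core_op ((b * a) ^+ hf gT) a = b.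
  by rewrite /core_op -mulgA (cm a^-1) mulgA sqrtK // mulgK.
rewrite -e; apply: lreach_L; exact: lreach_refl.
Qed.
Section Forward.
Variable gT : finGroupType.
Local Notation op := (@core_op gT).
Hypothesis sc : simply_connected op.

Lemma transport (S : Type) (th : gT -> gT -> S -> S) :
  quandle_cocycle op th ->
  exists (ga gi : gT -> S -> S),
    (forall x, cancel (gi x) (ga x)) /\
    (forall x y s, th x y (ga y s) = ga (op x y) s).
Proof.
move=> thc; have [ga [gi [K1 K2 H]]] := sc.2 S th thc.
exists ga, gi; split=> // x y s; by rewrite H /= K1.
Qed.

Lemma conn a b : lreach op a b.
Proof. exact: sc.1.2. Qed.

Lemma step1 (a b u : gT) : commute [~ a, b] u.
Proof.
pose th x y (t : gT) := op x (op y t).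
have thc : quandle_cocycle op th.
  split.
  - move=> x y; exists (fun t => op y (op x t)) => t; rewrite /th !op_invol //.
  - by move=> x y z t; rewrite /th /core_op /=; gsimpl.
  - by move=> x t; rewrite /th op_invol.
have [ga [gi [K H]]] := transport thc.
have M g z s : ga (g * z * g) s = g * ga z s * g.
  have -> : g * z * g = op g (op 1 z) by rewrite /core_op; gsimpl.
  by rewrite -!H /th /core_op; gsimpl.
have key s : ga 1 s = a^-1 * b^-1 * a * b * ga 1 s * (a^-1 * b^-1 * a * b)^-1.
  have e : (1:gT) = a^-1 * (b^-1 * ((a*b) * (a * (b * (b^-1*a^-1*1*(b^-1*a^-1)) * b) * a) * (a*b)) * b^-1) * a^-1.
    by gsimpl.
  by rewrite {1}e !M; gsimpl.
have cu : a^-1 * b^-1 * a * b * u = u * (a^-1 * b^-1 * a * b).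
  have := key (gi 1 u); rewrite K => ek.
  by rewrite {2}ek; gsimpl.
rewrite /commute /commg /conjg !mulgA; move: cu; by rewrite !mulgA.
Qed.
End Forward.
Section Class2.
Variable gT : finGroupType.
Local Notation op := (@core_op gT).
Hypothesis Hc : forall a b u : gT, commute [~ a, b] u.
Implicit Types x y z : gT.

Lemma cJ x y z : [~ x, y] ^ z = [~ x, y].
Proof. by rewrite conjgE (Hc x y z) mulKg. Qed.

Lemma BM1 x y z : [~ x * y, z] = [~ x, z] * [~ y, z].
Proof. by rewrite commMgJ cJ. Qed.

Lemma BM2 x y z : [~ x, y * z] = [~ x, y] * [~ x, z].
Proof. by rewrite commgMJ cJ (Hc x z). Qed.

Lemma BV1 x z : [~ x^-1, z] = [~ x, z]^-1.
Proof.
apply: (@mulIg _ [~ x, z]); rewrite mulVg -BM1 mulVg; exact: comm1g.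
Qed.

Lemma BV2 x z : [~ x, z^-1] = [~ x, z]^-1.
Proof.
apply: (@mulIg _ [~ x, z]); rewrite mulVg -BM2 mulVg; exact: commg1.
Qed.

Lemma Bsym x y : [~ y, x] = [~ x, y]^-1.
Proof. by rewrite invgR. Qed.

Lemma Ccomm x y z w : commute [~ x, y] [~ z, w].
Proof. exact: Hc. Qed.

Lemma cocyc2 : quandle_cocycle op (fun x y t => [~ x, y] * t).
Proof.
split.
- move=> x y; exists (fun t => [~ x, y]^-1 * t) => t; [exact: mulKg | exact: mulKVg].
- move=> x y z t /=; rewrite [LHS]mulgA [RHS]mulgA; congr (_ * t).
  rewrite /core_op !BM1 !BM2 !BV1 !BV2 !commgg ?mul1g ?mulg1 ?invgK !(Bsym y x).
  have cPR : commute [~ y, z] [~ y, x]^-1 by apply: Hc.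
  have cPQ : commute [~ y, x]^-1 [~ x, z]^-1.
    by apply: commuteV; apply/commute_sym; apply: Hc.
  set P := [~ y, x]^-1 in cPR cPQ *; set Q := [~ x, z] in cPQ *.
  set R := [~ y, z] in cPR *.
  rewrite mulgKV -[P * R * P]mulgA cPR cPQ; by rewrite !mulgA.
- by move=> x t /=; rewrite commgg mul1g.
Qed.

Hypothesis sc : simply_connected op.

Lemma step2 (a b : gT) : [~ a, b] ^+ 4 = 1.
Proof.
have [ga [gi [K H]]] := transport sc cocyc2.
have M g z s : ga (g * z * g) s = [~ g, z]^-1 * ga z s.
  have -> : g * z * g = op g (op 1 z) by rewrite /core_op; gsimpl.
  by rewrite -!H comm1g mul1g /core_op mul1g mulg1 BV2.
pose s := gi 1 1.
have e : (1:gT) = a * (b * (a^-1 * (b^-1 * 1 * b^-1) * a^-1) * b) * a.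
  transitivity ([~ a^-1, b^-1] * [~ b, a]).
    by rewrite BV1 BV2 invgK (Bsym a b) mulgV.
  by rewrite /commg /conjg; gsimpl.
have : ga 1 s = ga (a * (b * (a^-1 * (b^-1 * 1 * b^-1) * a^-1) * b) * a) s.
  by rewrite -e.
rewrite !M ?(BM2, BV2, BV1, commg1, comm1g, commgg, invgK) (Bsym a b).
move: (ga 1 s) [~ a, b] => w q.
move/(congr1 (fun v => v * w^-1)); rewrite mulgV /=; gsimpl.
move/(congr1 (fun v => v^-1)); rewrite invg1 /=; gsimpl => E.
by rewrite E !expgS expg0 mulg1 !mulgA.
Qed.


Local Notation D := [~: [set: gT], [set: gT]].

Lemma Dcent (c u : gT) : c \in D -> commute c u.
Proof.
have sub : D \subset 'C[u].
  rewrite gen_subG; apply/subsetP => _ /imset2P[x y _ _ ->]; apply/cent1P; exact: Hc.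
by move/(subsetP sub)/cent1P.
Qed.

Lemma inv_step x z : (exists w c, c \in D /\ z = w * w * c) ->
  exists w c, c \in D /\ op x z = w * w * c.
Proof.
case=> w [c [Dc ->]].
have cc u : commute c^-1 u by apply: commute_sym; apply: commuteV; apply: commute_sym; exact: Dcent.
exists (x * w^-1), ([~ w^-1, x] * c^-1); split.
  by rewrite groupM ?groupV // mem_commg ?inE.
transitivity (x * w^-1 * w^-1 * x * c^-1); last by rewrite /commg /conjg; gsimpl.
by rewrite /core_op invMg mulgA -(cc x) -!mulgA (cc _); gsimpl.
Qed.

Lemma inv_all (z : gT) : exists w c, c \in D /\ z = w * w * c.
Proof.
elim: (conn sc (1 : gT) z) => [|x b _ IH|x b _ IH].
- by exists 1, 1; rewrite group1 !mulg1.
- exact: inv_step.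
- by rewrite -(op_invol x b); apply: inv_step.
Qed.

Lemma sqcomm (a b : gT) : exists w, [~ a, b] = [~ w, b] ^+ 2.
Proof.
have [w [c [Dc ->]]] := inv_all a; exists w.
rewrite !BM1; have /commgP/eqP -> : commute c b by exact: Dcent.
by rewrite mulg1.
Qed.

Lemma comm_triv (a b : gT) : [~ a, b] = 1.
Proof.
have sq2 x y : [~ x, y] ^+ 2 = 1.
  by have [w ->] := sqcomm x y; rewrite -expgM step2.
by have [w ->] := sqcomm a b; rewrite sq2.
Qed.

Lemma all_sq (z : gT) : exists w, z = w * w.
Proof.
have [w [c [Dc ->]]] := inv_all z; exists w.
have sub : D \subset [1 gT].
  rewrite gen_subG; apply/subsetP => _ /imset2P[x y _ _ ->].
  by rewrite comm_triv inE.
by move/(subsetP sub)/set1gP: Dc => ->; rewrite mulg1.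
Qed.

Lemma odd_card : odd #|gT|.
Proof.
apply/negPn/negP => ev.
have d2 : 2 %| #|[set: gT]%G| by rewrite cardsT /= dvdn2 ev.
have [t _ ot] := Cauchy (isT : prime 2) d2.
have inj : {in [set: gT] &, injective (fun w : gT => w * w)}.
  apply/image_injP; rewrite eqn_leq leq_image_card /=.
  apply: subset_leq_card; apply/subsetP => z _.
  have [w ->] := all_sq z; exact: image_f.
have t1 : t = 1 by apply: inj; rewrite ?inE // mulg1 -expg2 -ot expg_order.
by move: ot; rewrite t1 order1.
Qed.

Lemma all_comm (x y : gT) : commute x y.
Proof. by apply/commgP/eqP; rewrite comm_triv. Qed.
End Class2.

Section FormCocycle.
Import GRing.Theory.
Variables (gT : finGroupType) (R : comNzRingType) (al be : gT -> R).
Local Notation op := (@core_op gT).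
Hypothesis alM : forall u v, al (u * v)%g = (al u + al v)%R.
Hypothesis beM : forall u v, be (u * v)%g = (be u + be v)%R.
Hypothesis cm : forall x y : gT, commute x y.
Hypothesis sc : simply_connected op.

Lemma add1 (f : gT -> R) : (forall u v, f (u * v)%g = (f u + f v)%R) -> f 1%g = 0%R.
Proof.
move=> fM; apply: (@GRing.addrI _ (f 1%g)); by rewrite -fM mulg1 GRing.addr0.
Qed.

Lemma addV (f : gT -> R) : (forall u v, f (u * v)%g = (f u + f v)%R) ->
  forall u, f u^-1 = (- f u)%R.
Proof.
move=> fM u; apply: (@GRing.addrI _ (f u)); by rewrite -fM mulgV (add1 fM) GRing.subrr.
Qed.

Definition om u v : R := (al u * be v - al v * be u)%R.

Lemma cocycF : quandle_cocycle op (fun u v t => (om u v + t)%R).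
Proof.
split.
- by move=> u v; exists (fun t => t - om u v)%R => t /=; ring.
- move=> x y z t /=; rewrite /om /core_op !alM !beM !(addV alM) !(addV beM); ring.
- by move=> u t /=; rewrite /om GRing.subrr GRing.add0r.
Qed.

Lemma form_contra (a b : gT) : (4%:R * om a b)%R = 0%R.
Proof.
have [ga [gi [K H]]] := transport sc cocycF.
have M g z s : ga (g * z * g)%g s = (om g z^-1 + (om 1 z + ga z s))%R.
  have -> : (g * z * g = op g (op 1 z))%g by rewrite /core_op; gsimpl.
  by rewrite -!H /core_op mul1g mulg1.
pose s := gi 1%g 0%R.
have e : (1:gT) = (a * (b * (a^-1 * (b^-1 * 1 * b^-1) * a^-1) * b) * a)%g.
  transitivity ([~ a^-1, b^-1] * [~ b, a])%g.
    have ct (u v : gT) : [~ u, v] = 1%g by apply/eqP/commgP; exact: cm.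
    by rewrite !ct mulg1.
  by rewrite /commg /conjg; gsimpl.
have : ga 1%g s = ga (a * (b * (a^-1 * (b^-1 * 1 * b^-1) * a^-1) * b) * a)%g s.
  by rewrite -e.
rewrite !M /om ?invMg ?invgK !alM !beM !(addV alM) !(addV beM) (add1 alM) (add1 beM).
move/eqP; rewrite -GRing.subr_eq0 => /eqP E.
rewrite -[RHS]E; ring.
Qed.
End FormCocycle.

Section Step4.
Import GRing.Theory.
Variable gT : finGroupType.
Local Notation op := (@core_op gT).
Hypothesis sc : simply_connected op.
Hypothesis cm : forall x y : gT, commute x y.
Hypothesis oddn : odd #|gT|.

Definition dl (c u : gT) : nat :=
  if [pick k : 'I_#[c] | c ^+ k == u] is Some k then val k else 0.

Lemma dlP c u : u \in <[c]> -> c ^+ dl c u = u.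
Proof.
move=> uc; rewrite /dl; case: pickP => [k /eqP // | Hn]; exfalso.
have /cycleP [i ei] := uc.
have := Hn (Ordinal (ltn_pmod i (order_gt0 c))).
by rewrite /= expg_mod_order ei eqxx.
Qed.

Lemma dl_mod c u k : u \in <[c]> -> c ^+ k = u -> dl c u = k %[mod #[c]].
Proof. by move=> uc ek; apply/eqP; rewrite -eq_expg_mod_order dlP // ek. Qed.

Lemma cyclic_of : cyclic [set: gT].
Proof.
apply: contraT => ncyc.
have ab : abelian [set: gT] by apply/centsP => u _ v _; exact: cm.
have [b defG ob] := abelian_structure (G := [set: gT]%G) ab.
have rk : 1 < 'r([set: gT]) by rewrite ltnNge -abelian_rank1_cyclic.
have sz : 1 < size b by rewrite -(size_map order) ob size_abelian_type.
case: b defG ob sz => [|x [|y r]] // defG ob _.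
have srt := abelian_type_dvdn_sorted [set: gT].
have gt1 := abelian_type_gt1 [set: gT].
rewrite -ob /= in srt gt1.
have yx : #[y] %| #[x] by case/andP: srt.
have y1 : 1 < #[y] by case/and3P: gt1.
set p := pdiv #[y].
have pp : prime p := pdiv_prime y1.
have py : p %| #[y] := pdiv_dvd _.
have px : p %| #[x] := dvdn_trans py yx.
have p2 : 2 < p.
  rewrite ltn_neqAle prime_gt1 // andbT; apply/eqP => p2.
  have := dvdn_trans py (order_dvdG (in_setT y)); rewrite cardsT -p2 dvdn2 oddn.
  by [].
rewrite !big_cons in defG.
case/dprodP: defG => [[X H _ eH] defXH cXH tiXH].
move: defXH cXH tiXH; rewrite eH => defXH cXH tiXH.
move: eH => /dprodP [[Y K _ eK] defYK cYK tiYK].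
move: defYK cYK tiYK; rewrite eK => defYK cYK tiYK.
have complH : H \in [complements to <[x]>%G in [set: gT]%G] by apply/complP.
have complK : K \in [complements to <[y]>%G in H] by apply/complP.
have xn : <[x]>%G <| [set: gT]%G by rewrite -(sub_abelian_normal _ ab) subsetT.
have pXM u v : divgr <[x]> H (u * v) = divgr <[x]> H u * divgr <[x]> H v.
  exact: (divgrM complH cXH (in_setT u) (in_setT v)).
have pHM u v : remgr <[x]> H (u * v) = remgr <[x]> H u * remgr <[x]> H v.
  exact: (remgrM complH xn (in_setT u) (in_setT v)).
have pH_in u : remgr <[x]> H u \in H by apply: mem_remgr; rewrite defXH inE.
have pYM v w : v \in H -> w \in H ->
    divgr <[y]> K (v * w) = divgr <[y]> K v * divgr <[y]> K w.
  by move=> vH wH; rewrite (divgrM complK cYK vH wH).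
have yH : y \in H by rewrite -defYK; apply: (subsetP (mulG_subl _ _)); exact: cycle_id.
have p1 : 1 < p by rewrite prime_gt1.
have castmod (m n : nat) : m = n %[mod p] -> (m%:R : 'Z_p)%R = (n%:R)%R.
  by move=> e; apply: val_inj; rewrite /= !val_Zp_nat.
have dl_addp c u v : p %| #[c] -> u \in <[c]> -> v \in <[c]> ->
    dl c (u * v) = dl c u + dl c v %[mod p].
  move=> pc uc vc.
  have e : dl c (u * v) = dl c u + dl c v %[mod #[c]].
    by apply: dl_mod; rewrite ?groupM // expgD !dlP.
  by rewrite -(modn_dvdm (dl c (u * v)) pc) e modn_dvdm.
have dl_p c k u : p %| #[c] -> u \in <[c]> -> c ^+ k = u -> ((dl c u)%:R : 'Z_p)%R = (k%:R)%R.
  move=> pc uc ek; apply: castmod.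
  by rewrite -(modn_dvdm (dl c u) pc) (dl_mod uc ek) modn_dvdm.
pose al u := ((dl x (divgr <[x]> H u))%:R : 'Z_p)%R.
pose be u := ((dl y (divgr <[y]> K (remgr <[x]> H u)))%:R : 'Z_p)%R.
have alM u v : al (u * v) = (al u + al v)%R.
  rewrite /al -natrD; apply: castmod; rewrite pXM; apply: dl_addp px _ _;
  by apply: mem_divgr; rewrite defXH inE.
have beM u v : be (u * v) = (be u + be v)%R.
  rewrite /be -natrD; apply: castmod; rewrite pHM pYM ?pH_in //; apply: dl_addp py _ _;
  by apply: mem_divgr; rewrite defYK pH_in.
have alx : al x = 1%R.
  by rewrite /al divgr_id ?cycle_id // (dl_p x 1%N) ?cycle_id.
have aly : al y = 0%R.
  rewrite /al -[y]mul1g divgrMid ?group1 // (dl_p x 0%N) ?group1 //.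
have bex : be x = 0%R.
  by rewrite /be remgr1 ?cycle_id // divgr_id ?group1 // (dl_p y 0%N) ?group1.
have bey : be y = 1%R.
  by rewrite /be remgr_id // divgr_id ?cycle_id // (dl_p y 1%N) ?cycle_id.
have := form_contra alM beM cm sc x y.
rewrite /om alx aly bex bey mulr1 mul0r subr0 mulr1 => E.
change ((4%:R)%R = 0%R :> 'Z_p) in E.
have d4 : p %| 4.
  by have := val_Zp_nat p1 4; rewrite E /= => e; rewrite /dvdn -e.
have le4 := dvdn_leq (isT : 0 < 4) d4.
move: pp p2 le4 d4; case: (p) => [|[|[|[|[|q]]]]] //.
Qed.
End Step4.

Theorem forward (gT : finGroupType) :
  simply_connected (@core_op gT) -> cyclic [set: gT] /\ odd #|[set: gT]|.
Proof.
move=> sc.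
have Hc : forall a b u : gT, commute [~ a, b] u := step1 sc.
have od := odd_card Hc sc.
have cm := all_comm Hc sc.
by split; [exact: cyclic_of sc cm od | rewrite cardsT].
Qed.

Theorem corollary4p8 (gT : finGroupType) :
  simply_connected (@core_op gT) <-> (cyclic [set: gT] /\ odd #|[set: gT]|).
Proof.
split; first exact: forward.
by case=> cyc od; exact: backward.
Qed.
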